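(* For every simple graph $G$, $e(G)\leq(\Delta(G)+1)M(G)$, where $\Delta(G)$ is the maximum degree and $M(G)$ the size of a maximum matching. Furthermore, for every integer $k\geq 7$, \[\mathcal{E}_{P_1\cup P_2}(k)=\begin{cases}k^2-\frac32 k & k\text{ even},\\ k^2-k & k\text{ odd}.\end{cases}\]
   Context: $P_1\cup P_2$ is the vertex-disjoint union of a single edge and a path with two edges. Graphs are simple, 2-uniform, without isolated vertices. $\operatorname{ex}(G,H)$ is the maximum number of edges of a subgraph of $G$ containing no copy of $H$, and $\mathcal{E}_H(k):=\sup\{e(G): G\text{ simple}, \operatorname{ex}(G,H)<k\}$. *)

(* Defs.v *)
From mathcomp Require Import all_boot.
Set Implicit Arguments. Unset Strict Implicit. Unset Printing Implicit Defensive.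

(* A finite simple graph on vertex type T is given by its edge set E, a set of
   2-element subsets of T. Isolated vertices are irrelevant to every quantity
   below (e(G), Delta(G), M(G), ex(G,H)). *)
Definition is_simple_graph (T : finType) (E : {set {set T}}) : Prop :=
  forall e, e \in E -> #|e| = 2.

Definition nedges (T : finType) (E : {set {set T}}) : nat := #|E|.

Definition max_degree (T : finType) (E : {set {set T}}) : nat :=
  \max_(v : T) #|[set e in E | v \in e]|.

Definition is_matching (T : finType) (M : {set {set T}}) : bool :=
  [forall e1 in M, forall e2 in M, (e1 == e2) || [disjoint e1 & e2]].

Definition matching_number (T : finType) (E : {set {set T}}) : nat :=
  \max_(M in powerset E | is_matching M) #|M|.

(* F contains a copy of P_1 \cup P_2: an edge ab and a path cde, with
   a,b,c,d,e pairwise distinct *)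
Definition has_P1P2 (T : finType) (F : {set {set T}}) : bool :=
  [exists a : T, exists b : T, exists c : T, exists d : T, exists e : T,
    [&& uniq [:: a; b; c; d; e], [set a; b] \in F, [set c; d] \in F
      & [set d; e] \in F]].

Definition ex_P1P2 (T : finType) (E : {set {set T}}) : nat :=
  \max_(F in powerset E | ~~ has_P1P2 F) #|F|.

Definition is_E_P1P2 (k v : nat) : Prop :=
  (forall (T : finType) (E : {set {set T}}),
      is_simple_graph E -> ex_P1P2 E < k -> nedges E <= v) /\
  (forall b : nat,
      (forall (T : finType) (E : {set {set T}}),
          is_simple_graph E -> ex_P1P2 E < k -> nedges E <= b) -> v <= b).

(* Main.v *)
Require Import Defs.
From mathcomp Require Import all_boot.
From mathcomp Require Import zify.
Set Implicit Arguments. Unset Strict Implicit. Unset Printing Implicit Defensive.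


Definition fb d m := d * m + d./2 * (m %/ uphalf d).
Lemma fb_mono d m1 m2 : m1 <= m2 -> fb d m1 <= fb d m2.
Proof.
move=> h; rewrite /fb; apply: leq_add; first by rewrite leq_mul2l h orbT.
by rewrite leq_mul2l leq_div2r ?orbT.
Qed.
Lemma fb_step d m1 m2 : m1 < m2 -> fb d m1 + d <= fb d m2.
Proof.
move=> h; have := fb_mono d h; rewrite /fb.
have := leq_div2r (uphalf d) (leqnSn m1).
rewrite mulnS.
set q1 := m1 %/ _; set q2 := m1.+1 %/ _; set h2 := d./2.
move=> hq; have : h2 * q1 <= h2 * q2 by rewrite leq_mul2l hq orbT.
lia.
Qed.
Lemma fb_super d a b : fb d a + fb d b <= fb d (a + b).
Proof.
rewrite /fb; set c := uphalf d.
have : a %/ c + b %/ c <= (a + b) %/ c.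
  case: (posnP c) => [->|cp]; first by rewrite !divn0.
  by rewrite leq_divRL // mulnDl leq_add // leq_trunc_div.
set qa := a %/ c; set qb := b %/ c; set qab := (a + b) %/ c; set h := d./2.
move=> hq; have : h * (qa + qb) <= h * qab by rewrite leq_mul2l hq orbT.
rewrite mulnDr mulnDr; lia.
Qed.
Lemma fb_conn d m n e : n <= m.*2.+1 -> e.*2 <= n * d -> e <= 'C(n, 2) -> e <= fb d m.
Proof.
move=> hn hd; rewrite bin2 => hc; rewrite /fb.
case: (leqP m.*2.+1 d) => hmd.
  have h1 : n * n.-1 <= m.*2.+1 * m.*2 by apply: leq_mul => //; lia.
  have h2 : (m.*2.+1 * m.*2)./2 = m.*2.+1 * m by rewrite -doubleMr doubleK.
  have h3 : e <= m.*2.+1 * m by rewrite -h2; apply: leq_trans hc _; apply: half_leq.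
  apply: leq_trans (leq_addr _ _); apply: leq_trans h3 _.
  by rewrite leq_mul2r hmd orbT.
case: (posnP d) => [d0|dp].
  by move: hd; rewrite d0 muln0 leqn0 double_eq0 => /eqP->.
have q1 : 1 <= m %/ uphalf d by rewrite divn_gt0; lia.
have h4 : n * d <= m.*2.+1 * d by rewrite leq_mul2r hn orbT.
have h5 : m.*2.+1 * d = (d * m).*2 + d by rewrite mulSn -doubleMl mulnC addnC.
have h6 : d./2 <= d./2 * (m %/ uphalf d) by rewrite leq_pmulr.
move: hd h4 h6; rewrite h5; set X := d * m; set Y := d./2 * _.
lia.
Qed.

Section Basics.
Variable T : finType.
Implicit Types (E F M N : {set {set T}}) (e f g : {set T}) (u v w x y : T).

Lemma disjP (A B : {set T}) : reflect (forall x, x \in A -> x \in B -> False) [disjoint A & B].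
Proof.
rewrite -setI_eq0; apply: (iffP eqP) => [H x xa xb | H].
  have: x \in A :&: B by rewrite inE xa xb.
  by rewrite H inE.
by apply/setP => x; rewrite inE in_set0; apply/negP => /andP[]; exact: H.
Qed.

Lemma coverP x M : reflect (exists2 e, e \in M & x \in e) (x \in cover M).
Proof. exact: bigcupP. Qed.

Lemma matchingP M :
  reflect (forall e f, e \in M -> f \in M -> e != f -> [disjoint e & f]) (is_matching M).
Proof.
apply: (iffP forall_inP) => [H e f eM fM nef | H e eM].
  by have /forall_inP/(_ f fM) := H e eM; rewrite (negbTE nef).
apply/forall_inP => f fM; case: eqP => //= /eqP; exact: H.
Qed.

Lemma matching_sub M N : M \subset N -> is_matching N -> is_matching M.
Proof.
move=> sMN /matchingP H; apply/matchingP => e f eM fM; apply: H; exact: (subsetP sMN).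
Qed.

Lemma matching_disj M e f x : is_matching M -> e \in M -> f \in M -> x \in e -> x \in f -> e = f.
Proof.
move=> /matchingP H eM fM xe xf; apply/eqP; apply/negPn/negP => nef.
by have /disjP := H _ _ eM fM nef => /(_ x xe xf).
Qed.

Lemma matchingU1 M e : is_matching M -> [disjoint e & cover M] -> is_matching (e |: M).
Proof.
move=> /matchingP H dis; apply/matchingP => f g; rewrite !inE.
have dd h : h \in M -> [disjoint e & h].
  move=> hM; apply/disjP => z ze zh; move/disjP: dis => /(_ z ze); apply.
  by apply/coverP; exists h.
case/orP => [/eqP->|fM]; case/orP => [/eqP->|gM] //; first by rewrite eqxx.
  by move=> _; apply: dd.
by move=> _; rewrite disjoint_sym; apply: dd.
exact: H.
Qed.

Lemma in_coverU1 z e M : (z \in cover (e |: M)) = (z \in e) || (z \in cover M).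
Proof.
apply/coverP/orP => [[g] | [ze|/coverP[g gM zg]]].
  by rewrite !inE => /orP[/eqP->|gM] zg; [left|right; apply/coverP; exists g].
  by exists e; rewrite ?setU11.
by exists g; rewrite // inE gM orbT.
Qed.

Lemma in_coverD1 z f M : is_matching M -> f \in M ->
  (z \in cover (M :\ f)) = (z \notin f) && (z \in cover M).
Proof.
move=> mM fM; apply/coverP/andP => [[g] | [zf /coverP[g gM zg]]].
  rewrite !inE => /andP[gf gM] zg; split; last by apply/coverP; exists g.
  by apply/negP => zf; move: gf; rewrite (matching_disj mM gM fM zg zf) eqxx.
exists g => //; rewrite !inE gM andbT; apply/negP => /eqP gf.
by rewrite -gf zg in zf.
Qed.

Lemma cover_sub z M N : M \subset N -> z \in cover M -> z \in cover N.
Proof. by move=> /subsetP sMN /coverP[g gM zg]; apply/coverP; exists g => //; apply: sMN. Qed.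

Lemma edge2 e x : #|e| = 2 -> x \in e -> exists2 y, y != x & e = [set x; y].
Proof.
move=> /eqP /cards2P [a [b [ab ->]]]; rewrite !inE => /orP[]/eqP->.
  by exists b; rewrite // eq_sym.
by exists a => //; apply/setP => z; rewrite !inE orbC.
Qed.

Lemma set2C x y : [set x; y] = [set y; x] :> {set T}.
Proof. by apply/setP => z; rewrite !inE orbC. Qed.

Lemma card_sub1 M e : e \notin M -> #|e |: M| = #|M|.+1.
Proof. by move=> eM; rewrite cardsU1 eM. Qed.

Lemma card_D1 M e : e \in M -> #|M :\ e| = #|M|.-1.
Proof. by move=> eM; rewrite (cardsD1 e M) eM. Qed.

Definition swapR E M N u x (Mp Np : {set {set T}}) :=
  [/\ Mp \subset E, Np \subset E, is_matching Mp, is_matching Np &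
      #|Mp| = #|M| /\ #|Np| = #|N|] /\
  [/\ x \notin cover N, x != u, x \in cover Np,
      {subset cover Mp <= (u |: cover M) :\ x} &
      {subset cover Np <= x |: (cover N :\ u)}].

Lemma swap n : forall E M N u, #|N| <= n -> is_simple_graph E ->
  M \subset E -> N \subset E -> is_matching M -> is_matching N ->
  u \notin cover M -> u \in cover N ->
  (exists2 Ms : {set {set T}}, Ms \subset E & is_matching Ms /\ #|Ms| = #|M|.+1) \/
  (exists x Mp Np, swapR E M N u x Mp Np).
Proof.
elim: n => [|n IH] E M N u sN sE sME sNE mM mN uM uN.
  by move: sN; rewrite leqn0 cards_eq0 => /eqP N0; move: uN; rewrite N0 /cover big_set0 inE.
have [e eN ue] := coverP _ _ uN.
have [a au ea] := edge2 (sE _ (subsetP sNE _ eN)) ue.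
subst e.
have uaE : [set u; a] \in E by apply: (subsetP sNE).
have ua_notM : [set u; a] \notin M.
  by apply/negP => H; move/negP: uM; apply; apply/coverP; exists [set u; a]; rewrite // !inE eqxx.
have uaM z : z \in [set u; a] -> z \in cover M -> z = a.
  rewrite !inE => /orP[]/eqP-> // H; by rewrite H in uM.
case: (boolP (a \in cover M)) => aM; last first.
  left; exists ([set u; a] |: M).
    apply/subsetP => z; rewrite !inE => /orP[/eqP->//|]; exact: (subsetP sME).
  split; last by rewrite card_sub1.
  apply: matchingU1 => //; apply/disjP => z zua zM.
  by have za := uaM z zua zM; rewrite za (negbTE aM) in zM.
have [f fM af] := coverP _ _ aM.
have [b ba fe] := edge2 (sE _ (subsetP sME _ fM)) af.
subst f.
have abE : [set a; b] \in E by apply: (subsetP sME).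
have bu : b != u.
  by apply/eqP => bu; move: uM; rewrite -bu; apply/negP/negPn/coverP; exists [set a; b]; rewrite // !inE eqxx orbT.
have hMa g : g \in M -> a \in g -> g = [set a; b].
  by move=> gM ag; apply: (matching_disj mM gM fM ag); rewrite !inE eqxx.
have hNu g : g \in N -> u \in g -> g = [set u; a].
  by move=> gN ug; apply: (matching_disj mN gN eN ug); rewrite !inE eqxx.
have hNa g : g \in N -> a \in g -> g = [set u; a].
  by move=> gN ag; apply: (matching_disj mN gN eN ag); rewrite !inE eqxx orbT.
have aN : a \in cover N by apply/coverP; exists [set u; a]; rewrite // !inE eqxx orbT.
have bM : b \in cover M by apply/coverP; exists [set a; b]; rewrite // !inE eqxx orbT.
have mM1 : is_matching (M :\ [set a; b]) by apply: matching_sub mM; apply: subsetDl.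
have mN1 : is_matching (N :\ [set u; a]) by apply: matching_sub mN; apply: subsetDl.
have cM1 : #|M :\ [set a; b]|.+1 = #|M|.
  by rewrite card_D1 // prednK // (cardD1 [set a; b]) fM.
have cN1 : #|N :\ [set u; a]|.+1 = #|N|.
  by rewrite card_D1 // prednK // (cardD1 [set u; a]) eN.
case: (boolP (b \in cover N)) => bN.
  pose E1 := [set g in E | (u \notin g) && (a \notin g)].
  have E1u z : z \in cover E1 -> (z != u) && (z != a).
    case/coverP => g; rewrite inE => /andP[_ /andP[ug ag]] zg.
    by apply/andP; split; apply/eqP => zz; [rewrite -zz zg in ug | rewrite -zz zg in ag].
  have sM1 : M :\ [set a; b] \subset E1.
    apply/subsetP => g; rewrite !inE => /andP[gf gM]; rewrite (subsetP sME _ gM) /=.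
    apply/andP; split; apply/negP => H.
      by move: uM; apply/negP/negPn/coverP; exists g.
    by rewrite (hMa g gM H) eqxx in gf.
  have sN1 : N :\ [set u; a] \subset E1.
    apply/subsetP => g; rewrite !inE => /andP[gf gN]; rewrite (subsetP sNE _ gN) /=.
    apply/andP; split; apply/negP => H.
      by rewrite (hNu g gN H) eqxx in gf.
    by rewrite (hNa g gN H) eqxx in gf.
  have sE1 : is_simple_graph E1 by move=> g; rewrite inE => /andP[gE _]; apply: sE.
  have bM1 : b \notin cover (M :\ [set a; b]) by rewrite in_coverD1 // !inE eqxx orbT.
  have bN1 : b \in cover (N :\ [set u; a]) by rewrite in_coverD1 // !inE negb_or bu ba.
  have sN1' : #|N :\ [set u; a]| <= n by rewrite -ltnS cN1.
  have uaE1 : [set u; a] \notin E1 by rewrite !inE eqxx /= andbF.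
  case: (IH E1 _ _ b sN1' sE1 sM1 sN1 mM1 mN1 bM1 bN1) =>
     [[Ms sMs [mMs cMs]] | [x [Mp [Np [[sMp sNp mMp mNp [cMp cNp]] [xN xb xNp cvMp cvNp]]]]]].
    left; exists ([set u; a] |: Ms).
      apply/subsetP => z; rewrite !inE => /orP[/eqP->//|/(subsetP sMs)].
      by rewrite inE => /andP[].
    split.
      apply: matchingU1 => //; apply/disjP => z zua zMs.
      move: (E1u z (cover_sub sMs zMs)); move: zua; rewrite !inE.
      by case/orP => /eqP->; rewrite eqxx /= ?andbF.
    rewrite card_sub1 ?cMs ?cM1 //; apply/negP => H; move: uaE1.
    by rewrite (subsetP sMs _ H).
  have /andP[xu xa] := E1u x (cover_sub sNp xNp).
  right; exists x, ([set u; a] |: Mp), ([set a; b] |: Np); split; split.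
  - apply/subsetP => z; rewrite !inE => /orP[/eqP->//|/(subsetP sMp)].
    by rewrite inE => /andP[].
  - apply/subsetP => z; rewrite !inE => /orP[/eqP->//|/(subsetP sNp)].
    by rewrite inE => /andP[].
  - apply: matchingU1 => //; apply/disjP => z zua zMs.
    move: (E1u z (cover_sub sMp zMs)); move: zua; rewrite !inE.
    by case/orP => /eqP->; rewrite eqxx /= ?andbF.
  - apply: matchingU1 => //; apply/disjP => z zab zNp.
    move: zab; rewrite !inE => /orP[]/eqP zz; subst z.
      by move: (E1u a (cover_sub sNp zNp)) => /andP[_]; rewrite eqxx.
    by move: (cvNp b zNp); rewrite !inE eqxx /= orbF eq_sym (negbTE xb).
  - split.
      rewrite card_sub1 ?cMp ?cM1 //; apply/negP => H; move: uaE1.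
      by rewrite (subsetP sMp _ H).
    rewrite card_sub1 ?cNp ?cN1 //; apply/negP => H.
    by move: (subsetP sNp _ H); rewrite !inE eqxx /= !andbF.
  - by move: xN; rewrite in_coverD1 // !inE negb_or xu xa.
  - exact: xu.
  - by rewrite in_coverU1 xNp orbT.
  - move=> z; rewrite in_coverU1 !inE => /orP[/orP[]/eqP->|zMp].
    + by rewrite eq_sym xu eqxx.
    + by rewrite eq_sym xa aM orbT.
    + move: (cvMp z zMp); rewrite !inE => /andP[-> /=] /orP[/eqP->|].
        by rewrite bM orbT.
      by rewrite in_coverD1 // => /andP[_ ->]; rewrite orbT.
  - move=> z; rewrite in_coverU1 !inE => /orP[/orP[]/eqP->|zNp].
    + by rewrite eq_sym (negbTE au) aN orbT.
    + by rewrite (negbTE bu) bN orbT.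
    + move: (cvNp z zNp); rewrite !inE => /orP[->//|/andP[_]].
      by rewrite in_coverD1 // !inE negb_or => /andP[/andP[-> _] ->]; rewrite orbT.
right; exists b, ([set u; a] |: (M :\ [set a; b])), ([set a; b] |: (N :\ [set u; a])).
split; split.
- apply/subsetP => z; rewrite !inE => /orP[/eqP->//|/andP[_]]; exact: (subsetP sME).
- apply/subsetP => z; rewrite !inE => /orP[/eqP->//|/andP[_]]; exact: (subsetP sNE).
- apply: matchingU1 => //; apply/disjP => z zua; rewrite in_coverD1 //.
  move: zua; rewrite !inE => /orP[]/eqP->.
    by rewrite (negbTE uM) andbF.
  by rewrite eqxx.
- apply: matchingU1 => //; apply/disjP => z zab; rewrite in_coverD1 //.
  move: zab; rewrite !inE => /orP[]/eqP->.
    by rewrite eqxx orbT.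
  by rewrite (negbTE bN) andbF.
- split.
    rewrite card_sub1 ?cM1 // !inE negb_and; apply/orP; right; exact: ua_notM.
  rewrite card_sub1 ?cN1 // !inE negb_and; apply/orP; right.
  by apply/negP => H; move: bN; apply/negP/negPn/coverP; exists [set a; b]; rewrite // !inE eqxx orbT.
- exact: bN.
- exact: bu.
- by rewrite in_coverU1 !inE eqxx orbT.
- move=> z; rewrite in_coverU1 !inE => /orP[/orP[]/eqP->|].
  + by rewrite eq_sym bu eqxx.
  + by rewrite eq_sym ba aM orbT.
  + by rewrite in_coverD1 // !inE negb_or => /andP[/andP[_ ->] ->]; rewrite orbT.
- move=> z; rewrite in_coverU1 !inE => /orP[/orP[]/eqP->|].
  + by rewrite eq_sym (negbTE au) aN orbT.
  + by rewrite eqxx.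
  + by rewrite in_coverD1 // !inE negb_or => /andP[/andP[-> _] ->]; rewrite orbT.
Qed.

Lemma nu_ge E M : M \subset E -> is_matching M -> #|M| <= matching_number E.
Proof.
move=> sME mM; rewrite /matching_number.
by apply: (leq_bigmax_cond M); rewrite powersetE sME.
Qed.

Lemma nu_ex E : exists M, [/\ M \subset E, is_matching M & #|M| = matching_number E].
Proof.
rewrite /matching_number.
have P0 : (set0 \in powerset E) && is_matching (set0 : {set {set T}}).
  by rewrite powersetE sub0set; apply/matchingP => e f; rewrite inE.
rewrite (bigmax_eq_arg set0 P0); case: arg_maxnP => // M /andP[].
by rewrite powersetE => sME mM _; exists M.
Qed.

Lemma aug E M x y : M \subset E -> is_matching M -> [set x; y] \in E ->
  x \notin cover M -> y \notin cover M -> #|M|.+1 <= matching_number E.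
Proof.
move=> sME mM xyE xM yM.
have nM : [set x; y] \notin M.
  by apply/negP => H; move/negP: xM; apply; apply/coverP; exists [set x; y]; rewrite // !inE eqxx.
rewrite -(card_sub1 nM); apply: nu_ge.
  by apply/subsetP => z; rewrite !inE => /orP[/eqP->//|]; apply: (subsetP sME).
apply: matchingU1 => //; apply/disjP => z; rewrite !inE => /orP[]/eqP-> H.
  by rewrite H in xM.
by rewrite H in yM.
Qed.

Definition adj E : rel T := fun x y => [set x; y] \in E.

Definition allmiss E := forall w, exists N,
  [/\ N \subset E, is_matching N, #|N| = matching_number E & w \notin cover N].

Lemma gallai_path E : is_simple_graph E -> allmiss E ->
  forall p u v M, path (adj E) u p -> v = last u p -> M \subset E -> is_matching M ->
  #|M| = matching_number E -> u \notin cover M -> v \notin cover M -> u = v.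
Proof.
move=> sE hE; elim => [|w p IH] u v M /=; first by move=> _ ->.
move=> /andP[uw pw] vl sME mM cM uM vM.
case: (eqVneq u v) => // nuv; exfalso.
case: (eqVneq w v) => [wv | wnv].
  by move: (aug sME mM uw uM); rewrite -wv in vM; move/(_ vM); rewrite cM ltnn.
have [N [sNE mN cN wN]] := hE w.
case: (boolP (u \in cover N)) => uN; last first.
  by move: (aug sNE mN uw uN wN); rewrite cN ltnn.
case: (swap (leqnn _) sE sME sNE mM mN uM uN) =>
   [[Ms sMs [mMs cMs]] | [x [Mp [Np [[sMp sNp mMp mNp [cMp cNp]] [xN xu xNp cvMp cvNp]]]]]].
  by move: (nu_ge sMs mMs); rewrite cMs cM ltnn.
case: (eqVneq x w) => [xw | xnw].
  subst x; move/eqP: wnv; apply.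
  apply: (IH w v Mp pw vl sMp mMp); first by rewrite cMp.
    by apply/negP => /cvMp; rewrite !inE eqxx.
  apply/negP => /cvMp; rewrite !inE => /andP[_ /orP[/eqP vu|]].
    by rewrite vu eqxx in nuv.
  by rewrite (negbTE vM).
have uNp : u \notin cover Np.
  by apply/negP => /cvNp; rewrite !inE eqxx /= orbF eq_sym (negbTE xu).
have wNp : w \notin cover Np.
  apply/negP => /cvNp; rewrite !inE => /orP[/eqP wx|/andP[_]].
    by rewrite wx eqxx in xnw.
  by rewrite (negbTE wN).
by move: (aug sNp mNp uw uNp wNp); rewrite cNp cN ltnn.
Qed.

Lemma cover_card M : is_simple_graph M -> is_matching M -> #|cover M| = (#|M|).*2.
Proof.
move=> sM mM.
have tM : trivIset M.
  apply/trivIsetP => e f eM fM nef; exact: (matchingP _ mM e f eM fM nef).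
by rewrite -(eqP tM) (eq_bigr (fun _ => 2)) ?sum_nat_const ?muln2 // => e eM; rewrite sM.
Qed.

Lemma conn_bound E : is_simple_graph E -> allmiss E ->
  (forall x y, x \in cover E -> y \in cover E -> connect (adj E) x y) ->
  #|cover E| <= (matching_number E).*2.+1.
Proof.
move=> sE hE cE.
have [M [sME mM cM]] := nu_ex E.
have sM : is_simple_graph M by move=> e eM; apply: sE; apply: (subsetP sME).
have R1 : #|cover E :\: cover M| <= 1.
  apply/card_le1_eqP => x y; rewrite !inE => /andP[xM xE] /andP[yM yE].
  have /connectP [p pp yl] := cE x y xE yE.
  by rewrite (gallai_path sE hE pp yl sME mM cM xM yM).
rewrite -(cardsID (cover M) (cover E)) -cM -(cover_card sM mM) -addn1.
apply: leq_add => //; apply: subset_leq_card; exact: subsetIr.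
Qed.

Definition deg E v := #|[set e in E | v \in e]|.

Lemma handshake E : is_simple_graph E -> \sum_(v in cover E) deg E v = (#|E|).*2.
Proof.
move=> sE.
have -> : \sum_(v in cover E) deg E v =
          \sum_(v in cover E) \sum_(e in E) (if v \in e then 1 else 0).
  apply: eq_bigr => v _; rewrite /deg -big_mkcondr /= sum1dep_card.
  by apply: eq_card => e; rewrite !inE.
rewrite exchange_big /= -muln2 -sum_nat_const.
apply: eq_bigr => e eE; rewrite -big_mkcondr /= sum1dep_card -(sE e eE).
apply: eq_card => v; rewrite !inE; apply/andP/idP => [[]//|ve]; split=> //.
by apply/coverP; exists e.
Qed.

Lemma edges_in E (W : {set T}) : is_simple_graph E -> (forall e, e \in E -> e \subset W) ->
  #|E| <= 'C(#|W|, 2).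
Proof.
move=> sE sW; rewrite -cards_draws; apply: subset_leq_card; apply/subsetP => e eE.
by rewrite inE sW // sE.
Qed.

Lemma deg_le_max E v : deg E v <= max_degree E.
Proof. rewrite /max_degree /deg.  apply: leq_bigmax. Qed.

Lemma max_degree_sub F E : F \subset E -> max_degree F <= max_degree E.
Proof.
move=> sFE; apply/bigmax_leqP => v _; apply: leq_trans (deg_le_max E v).
by apply: subset_leq_card; apply/subsetP => e; rewrite !inE => /andP[/(subsetP sFE) -> ->].
Qed.

Lemma main_bound d n : forall E, #|E| <= n -> is_simple_graph E -> max_degree E <= d ->
  #|E| <= fb d (matching_number E).
Proof.
elim: n => [|n IH] E sz sE dE; first by move: sz; rewrite leqn0 => /eqP->.
pose Ev v := [set e in E | v \notin e].
have sEv v : Ev v \subset E by apply/subsetP => e; rewrite inE => /andP[].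
have simEv v : is_simple_graph (Ev v) by move=> e /(subsetP (sEv v)); apply: sE.
case: (boolP [exists v, matching_number (Ev v) < matching_number E]).
  case/existsP => v ltv.
  have cE : #|E| = #|Ev v| + deg E v.
    rewrite -(cardsID [set e : {set T} | v \in e] E) addnC /deg; congr (_ + _); apply: eq_card => e;
    by rewrite /Ev !inE // andbC.
  have dp : 0 < deg E v.
    rewrite lt0n; apply/negP => /eqP d0.
    have EvE : Ev v = E.
      apply/setP => e; rewrite inE; case eE: (e \in E) => //=.
      apply/negP => ve.
      have : e \in [set e in E | v \in e] by rewrite inE eE ve.
      by move: d0; rewrite /deg => /eqP; rewrite cards_eq0 => /eqP->; rewrite inE.
    by move: ltv; rewrite EvE ltnn.
  have szv : #|Ev v| <= n by rewrite -ltnS; apply: leq_trans sz; rewrite cE -addn1 leq_add2l.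
  have := IH (Ev v) szv (simEv v) (leq_trans (max_degree_sub (sEv v)) dE).
  move=> hv; rewrite cE; apply: leq_trans (fb_step d ltv); apply: leq_add => //.
  exact: leq_trans (deg_le_max E v) dE.
rewrite negb_exists => /forallP nlt.
have hE : allmiss E.
  move=> w; have [N [sN mN cN]] := nu_ex (Ev w); exists N; split => //.
  - exact: subset_trans sN (sEv w).
  - apply/eqP; rewrite eqn_leq nu_ge ?(subset_trans sN (sEv w)) //=.
    by rewrite cN leqNgt nlt.
  - apply/negP => /coverP[e /(subsetP sN)]; rewrite inE => /andP[_ /negP]; exact.
case: (boolP [forall x, forall y, (x \in cover E) ==> (y \in cover E) ==> connect (adj E) x y]).
  move=> /forallP cE.
  have cE' x y : x \in cover E -> y \in cover E -> connect (adj E) x y.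
    by move=> xE yE; move/forallP: (cE x) => /(_ y); rewrite xE yE.
  have hn := conn_bound sE hE cE'.
  apply: (fb_conn hn).
    rewrite -handshake //.
    have : \sum_(v in cover E) deg E v <= \sum_(v in cover E) d.
      by apply: leq_sum => v _; exact: leq_trans (deg_le_max E v) dE.
    by rewrite sum_nat_const.
  apply: edges_in => // e eE; exact: bigcup_sup.
rewrite negb_forall => /existsP[x]; rewrite negb_forall => /existsP[y].
rewrite !negb_imply => /andP[xE /andP[yE nxy]].
pose C := [set z | connect (adj E) x z].
pose E1 := [set e in E | e \subset C].
pose E2 := E :\: E1.
have sE1 : E1 \subset E by apply/subsetP => e; rewrite inE => /andP[].
have sE2 : E2 \subset E by apply: subsetDl.
have disE2 e : e \in E2 -> [disjoint e & C].
  rewrite !inE => /andP[ne eE]; move: ne; rewrite eE /=.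
  have [p [q [pq ee]]] : exists p q, p != q /\ e = [set p; q] by apply/cards2P; rewrite sE.
  subst e => ne; apply/disjP => z zpq zC; move/negP: ne; apply.
  have pqE : adj E p q by [].
  have qpE : adj E q p by rewrite /adj set2C.
  move: zpq zC; rewrite !inE => /orP[]/eqP-> zC; apply/subsetP => w; rewrite !inE => /orP[]/eqP->;
    rewrite // ?inE.
  - by apply: connect_trans zC (connect1 _).
  - by apply: connect_trans zC (connect1 _).
have cE12 : #|E| = #|E1| + #|E2|.
  by rewrite -(cardsID E1 E) (setIidPr sE1).
have [e1 e1E xe1] := coverP _ _ xE.
have [q1 _ e1q] := edge2 (sE _ e1E) xe1.
have e1E1 : e1 \in E1.
  rewrite inE e1E /= e1q; apply/subsetP => w; rewrite !inE => /orP[]/eqP->; rewrite ?connect0 //.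
  by apply: connect1; rewrite /adj -e1q.
have [e2 e2E ye2] := coverP _ _ yE.
have e2E2 : e2 \in E2.
  rewrite !inE e2E andbT; apply/negP => /andP[_ /subsetP /(_ y ye2)].
  by rewrite inE (negbTE nxy).
have sz1 : #|E1| <= n.
  by rewrite -ltnS; apply: leq_trans sz; rewrite cE12 -addn1 leq_add2l card_gt0; apply/set0Pn; exists e2.
have sz2 : #|E2| <= n.
  by rewrite -ltnS; apply: leq_trans sz; rewrite cE12 addnC -addn1 leq_add2l card_gt0; apply/set0Pn; exists e1.
have simE1 : is_simple_graph E1 by move=> e /(subsetP sE1); apply: sE.
have simE2 : is_simple_graph E2 by move=> e /(subsetP sE2); apply: sE.
have h1 := IH E1 sz1 simE1 (leq_trans (max_degree_sub sE1) dE).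
have h2 := IH E2 sz2 simE2 (leq_trans (max_degree_sub sE2) dE).
have nsum : matching_number E1 + matching_number E2 <= matching_number E.
  have [M1 [sM1 mM1 cM1]] := nu_ex E1.
  have [M2 [sM2 mM2 cM2]] := nu_ex E2.
  have dM : M1 :&: M2 = set0.
    apply/setP => e; rewrite !inE; apply/negP => /andP[/(subsetP sM1) e1' /(subsetP sM2)].
    by rewrite inE e1'.
  have cU : #|M1 :|: M2| = #|M1| + #|M2| by rewrite cardsU dM cards0 subn0.
  rewrite -cM1 -cM2 -cU.
  apply: nu_ge.
    by rewrite subUset (subset_trans sM1 sE1) (subset_trans sM2 sE2).
  apply/matchingP => e f; rewrite !inE.
  have mix g h : g \in M1 -> h \in M2 -> [disjoint g & h].
    move=> gM hM; have := disE2 h (subsetP sM2 _ hM).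
    move: (subsetP sM1 _ gM); rewrite inE => /andP[_ gC] dh.
    rewrite disjoint_sym; apply/disjP => z zh zg; move/disjP: dh => /(_ z zh); apply.
    exact: (subsetP gC).
  case/orP => [eM|eM]; case/orP => [fM|fM] nef.
  - exact: (matchingP _ mM1).
  - exact: mix.
  - by rewrite disjoint_sym; apply: mix.
  - exact: (matchingP _ mM2).
rewrite cE12; apply: leq_trans (leq_add h1 h2) _.
apply: leq_trans (fb_super _ _ _) _; exact: fb_mono.
Qed.

End Basics.


Ltac solve_neq := match goal with
  | H : is_true (?x != ?y) |- is_true (?x != ?y) => exact H
  | H : is_true (?y != ?x) |- is_true (?x != ?y) => by rewrite eq_sym
  end.
Ltac uniq_tac := rewrite /= !inE !negb_or; repeat (apply/andP; split); try solve_neq; try done.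

Section Free.
Variable T : finType.
Implicit Types (E F M N : {set {set T}}) (e f g : {set T}).

Lemma freeP F : ~~ has_P1P2 F -> forall a b c d e : T, uniq [:: a; b; c; d; e] ->
  [set a; b] \in F -> [set c; d] \in F -> [set d; e] \in F -> False.
Proof.
move=> /existsPn H a b c d e u h1 h2 h3.
move: (H a) => /existsPn/(_ b)/existsPn/(_ c)/existsPn/(_ d)/existsPn/(_ e).
by rewrite u h1 h2 h3.
Qed.

Lemma card_set4 (y c d e : T) : #|[set y; c; d; e]| <= 4.
Proof.
apply: (leq_trans (leq_card_setU _ _)); rewrite cards1 addn1 ltnS.
apply: (leq_trans (leq_card_setU _ _)); rewrite cards1 addn1 ltnS.
by apply: (leq_trans (leq_card_setU _ _)); rewrite !cards1.
Qed.

Lemma card_set3 (c d e : T) : #|[set c; d; e]| <= 3.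
Proof.
apply: (leq_trans (leq_card_setU _ _)); rewrite cards1 addn1 ltnS.
by apply: (leq_trans (leq_card_setU _ _)); rewrite !cards1.
Qed.

Lemma p4_false F (y c d e : T) : is_simple_graph F -> ~~ has_P1P2 F -> 7 <= #|F| ->
  y != c -> y != d -> y != e -> c != d -> c != e -> d != e ->
  [set y; c] \in F -> [set c; d] \in F -> [set d; e] \in F -> False.
Proof.
move=> sF fF F7 yc yd ye cd ce de hyc hcd hde.
have out p q : [set p; q] \in F -> p != q -> p \notin [set y; c; d; e] -> False.
  move=> hpq pq H.
  have py : p != y by apply: (contraNneq _ H) => ->; rewrite !inE eqxx ?orbT.
  have pc : p != c by apply: (contraNneq _ H) => ->; rewrite !inE eqxx ?orbT.
  have pd : p != d by apply: (contraNneq _ H) => ->; rewrite !inE eqxx ?orbT.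
  have pe : p != e by apply: (contraNneq _ H) => ->; rewrite !inE eqxx ?orbT.
  case: (eqVneq q y) => [qy|qy].
    try subst q; apply: (freeP fF (a:=p) (b:=y) (c:=c) (d:=d) (e:=e)) => //; uniq_tac.
  case: (eqVneq q c) => [qc|qc].
    try subst q; apply: (freeP fF (a:=d) (b:=e) (c:=p) (d:=c) (e:=y)) => //; first uniq_tac.
    by rewrite set2C.
  case: (eqVneq q d) => [qd|qd].
    try subst q; apply: (freeP fF (a:=y) (b:=c) (c:=p) (d:=d) (e:=e)) => //; uniq_tac.
  case: (eqVneq q e) => [qe|qe].
    try subst q; apply: (freeP fF (a:=p) (b:=e) (c:=y) (d:=c) (e:=d)) => //; uniq_tac.
  apply: (freeP fF (a:=p) (b:=q) (c:=c) (d:=d) (e:=e)) => //; uniq_tac.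
have sub : forall g, g \in F -> g \subset [set y; c; d; e].
  move=> g gF; have [p [q [pq gpq]]] : exists p q, p != q /\ g = [set p; q].
    by apply/cards2P; rewrite sF.
  subst g; apply/subsetP => z /set2P[]->.
    case: (boolP (p \in [set y; c; d; e])) => [_|H]; first done.
    by exfalso; exact: (out p q gF pq H).
  case: (boolP (q \in [set y; c; d; e])) => [_|H]; first done.
  exfalso.
  apply: (out q p _ _ H); last by rewrite eq_sym.
  by rewrite set2C.
have := edges_in sF sub.
have := leq_bin2l 2 (card_set4 y c d e).
move=> h1 h2; have := leq_trans h2 h1.
by rewrite -ltnS; move/(leq_trans F7).
Qed.

Ltac p4 sF fF F7 y1 c1 d1 e1 :=
  apply: (p4_false sF fF F7 (y:=y1) (c:=c1) (d:=d1) (e:=e1)); try solve_neq; try (rewrite set2C; done); try done.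

Lemma free_main F : is_simple_graph F -> ~~ has_P1P2 F -> 7 <= #|F| ->
  is_matching F \/ exists z, forall g, g \in F -> z \in g.
Proof.
move=> sF fF F7.
case: (boolP (is_matching F)) => mF; [by left | right].
move: mF; rewrite /is_matching => /forall_inPn [e1 e1F] /forall_inPn [e2 e2F].
rewrite negb_or => /andP[ne12 nd].
move: nd; rewrite -setI_eq0 => /set0Pn [d]; rewrite inE => /andP[de1 de2].
have [c cd e1c] := edge2 (sF _ e1F) de1.
have [e ed e2e] := edge2 (sF _ e2F) de2.
subst e1 e2.
have ce : c != e by apply: contraNneq ne12 => ->.
case: (boolP [forall (g | g \in F), d \in g]) => [/forall_inP H | /forall_inPn [f f_F df]].
  by exists d.
exfalso.
have [p [q [pq fpq]]] : exists p q, p != q /\ f = [set p; q] by apply/cards2P; rewrite sF.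
subst f.
have pd : p != d by apply: contraNneq df => ->; rewrite !inE eqxx.
have qd : q != d by apply: contraNneq df => ->; rewrite !inE eqxx orbT.
have hdc : [set c; d] \in F by rewrite set2C.
have tri : [set c; e] \in F -> False.
  move=> hce.
  have : ~~ [forall (g | g \in F), g \subset [set c; d; e]].
    apply/negP => /forall_inP H; have := edges_in sF H.
    have := leq_bin2l 2 (card_set3 c d e).
    move=> h1 h2; have := leq_trans h2 h1.
    by rewrite -ltnS; move/(leq_trans F7).
  case/forall_inPn => g gF ng.
  have [p' [q' [pq' gpq]]] : exists p q, p != q /\ g = [set p; q] by apply/cards2P; rewrite sF.
  subst g.
  wlog: p' q' pq' gF ng / p' \notin [set c; d; e].
    move=> W; case: (boolP (p' \in [set c; d; e])) => hp; last exact: (W p' q').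
    case: (boolP (q' \in [set c; d; e])) => hq.
      by move: ng; rewrite subUset !sub1set hp hq.
    by apply: (W q' p'); rewrite 1?eq_sym // set2C.
  move=> hp.
  have p'c : p' != c by apply: (contraNneq _ hp) => ->; rewrite !inE eqxx ?orbT.
  have p'd : p' != d by apply: (contraNneq _ hp) => ->; rewrite !inE eqxx ?orbT.
  have p'e : p' != e by apply: (contraNneq _ hp) => ->; rewrite !inE eqxx ?orbT.
  case: (eqVneq q' c) => [qc|qc].
    subst q'; p4 sF fF F7 p' c d e.
  case: (eqVneq q' d) => [qd'|qd'].
    subst q'; p4 sF fF F7 p' d c e.
  case: (eqVneq q' e) => [qe|qe].
    subst q'; p4 sF fF F7 p' e d c.
  apply: (freeP fF (a:=p') (b:=q') (c:=c) (d:=d) (e:=e)) => //; uniq_tac.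
case: (eqVneq p c) => [pc|pnc].
  subst p; case: (eqVneq q e) => [qe|qne].
    by subst q; apply: tri.
  p4 sF fF F7 q c d e.
case: (eqVneq p e) => [pe|pne].
  subst p; case: (eqVneq q c) => [qc|qnc].
    by subst q; apply: tri; rewrite set2C.
  p4 sF fF F7 q e d c.
case: (eqVneq q c) => [qc|qnc].
  subst q; p4 sF fF F7 p c d e.
case: (eqVneq q e) => [qe|qne].
  subst q; p4 sF fF F7 p e d c.
apply: (freeP fF (a:=p) (b:=q) (c:=c) (d:=d) (e:=e)) => //; uniq_tac.
Qed.

End Free.


Section Ex.
Variable T : finType.
Implicit Types (E F M N : {set {set T}}) (e f g : {set T}).

Lemma ex_ge E F : F \subset E -> ~~ has_P1P2 F -> #|F| <= ex_P1P2 E.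
Proof. by move=> sFE fF; rewrite /ex_P1P2; apply: (leq_bigmax_cond F); rewrite powersetE sFE. Qed.

Lemma ex_lt E k : 0 < k -> (forall F, F \subset E -> ~~ has_P1P2 F -> #|F| < k) -> ex_P1P2 E < k.
Proof.
move=> k0 H; rewrite -(prednK k0) ltnS; apply/bigmax_leqP => F /andP[]; rewrite powersetE => sF fF.
by rewrite -ltnS prednK //; apply: H.
Qed.

Lemma star_free E (v : T) : ~~ has_P1P2 [set e in E | v \in e].
Proof.
apply/negP => /existsP[a /existsP[b /existsP[c /existsP[d /existsP[e]]]]].
case/and4P => u; rewrite !inE => /andP[_ vab] /andP[_ vcd] _.
move: u; case/orP: vab => /eqP <-; case/orP: vcd => /eqP <-; rewrite /= !inE eqxx ?orbT ?andbF //=.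
Qed.

Lemma matching_free M : is_matching M -> ~~ has_P1P2 M.
Proof.
move=> mM; apply/negP => /existsP[a /existsP[b /existsP[c /existsP[d /existsP[e]]]]].
case/and4P => u _ h1 h2.
have := matching_disj mM h1 h2 (x := d); rewrite !inE !eqxx orbT => /(_ isT isT) hh.
have : e \in [set c; d] by rewrite hh !inE eqxx orbT.
by move: u; rewrite !inE => /= + /orP[]/eqP ee; rewrite ee !inE eqxx ?orbT //= ?andbF.
Qed.

Lemma ex_bounds E k : ex_P1P2 E < k -> max_degree E < k /\ matching_number E < k.
Proof.
move=> hk; split.
  apply: leq_ltn_trans hk; apply/bigmax_leqP => v _; apply: ex_ge; last exact: star_free.
  by apply/subsetP => e; rewrite inE => /andP[].
have [M [sM mM <-]] := nu_ex E.
apply: leq_ltn_trans hk; apply: ex_ge => //; exact: matching_free.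
Qed.

Lemma part1 E : is_simple_graph E -> #|E| <= (max_degree E).+1 * matching_number E.
Proof.
move=> sE; apply: leq_trans (main_bound (leqnn _) sE (leqnn _)) _.
rewrite /fb mulSn addnC leq_add2r.
set c := uphalf _; set m := matching_number E.
have h1 : (max_degree E)./2 <= c by rewrite /c; lia.
apply: leq_trans (leq_mul h1 (leqnn _)) _.
by rewrite mulnC leq_trunc_div.
Qed.

End Ex.


Section Help.
Variable T : finType.
Implicit Types (E F M N : {set {set T}}) (e f g : {set T}) (W X A : {set T}).

Lemma deg_bound E (v : T) A :
  (forall e, e \in E -> v \in e -> exists2 y, y \in A & e = [set v; y]) -> deg E v <= #|A|.
Proof.
move=> H; apply: leq_trans (leq_imset_card (fun y => [set v; y]) A).
apply: subset_leq_card; apply/subsetP => e; rewrite inE => /andP[eE ve].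
by have [y yA ->] := H e eE ve; apply: imset_f.
Qed.

Lemma maxdeg_bound E t : (forall v, deg E v <= t) -> max_degree E <= t.
Proof. by move=> H; apply/bigmax_leqP => v _; apply: H. Qed.

Lemma nu_bound E t : (forall M, M \subset E -> is_matching M -> #|M| <= t) ->
  matching_number E <= t.
Proof. by move=> H; have [M [sM mM <-]] := nu_ex E; apply: H. Qed.

Lemma match_in M W : is_simple_graph M -> is_matching M -> (forall e, e \in M -> e \subset W) ->
  (#|M|).*2 <= #|W|.
Proof.
move=> sM mM H; rewrite -cover_card //; apply: subset_leq_card.
by apply/bigcupsP => e eM; apply: H.
Qed.

Lemma match_hit M X : is_matching M -> (forall e, e \in M -> exists2 x, x \in X & x \in e) ->
  #|M| <= #|X|.
Proof.
move=> mM H.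
pose g (e : {set T}) := [pick x in X :&: e].
have gS e : e \in M -> exists2 x, x \in X :&: e & g e = Some x.
  move=> eM; rewrite /g; case: pickP => [x xe|n0]; first by exists x.
  by have [x xX xe] := H e eM; move: (n0 x); rewrite inE xX xe.
have inj : {in M &, injective g}.
  move=> e1 e2 e1M e2M; have [x1 x1e ->] := gS e1 e1M; have [x2 x2e ->] := gS e2 e2M.
  case=> x12; subst x2; move: x1e x2e; rewrite !inE => /andP[_ h1] /andP[_ h2].
  exact: (matching_disj mM e1M e2M h1 h2).
rewrite -(card_in_imset inj) -(card_imset X (@Some_inj _)).
apply: subset_leq_card; apply/subsetP => o /imsetP[e eM ->].
have [x xe ->] := gS e eM; apply: imset_f; by move: xe; rewrite inE => /andP[].
Qed.

Lemma card_split M E1 E2 : M \subset E1 :|: E2 -> #|M| <= #|M :&: E1| + #|M :&: E2|.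
Proof.
move=> sM; apply: leq_trans (leq_card_setU _ _); apply: subset_leq_card.
apply/subsetP => e eM; move: (subsetP sM e eM); rewrite !inE eM /=.
by [].
Qed.

Lemma lower_ok E k : 7 <= k -> is_simple_graph E -> max_degree E < k ->
  matching_number E < k -> ex_P1P2 E < k.
Proof.
move=> k7 sE dk nk; apply: ex_lt; first by apply: leq_trans k7.
move=> F sFE fF.
have sF : is_simple_graph F by move=> e /(subsetP sFE); apply: sE.
case: (leqP #|F| 6) => [h|h]; first by apply: leq_ltn_trans h k7.
case: (free_main sF fF h) => [mF | [z hz]].
  by apply: leq_ltn_trans nk; apply: nu_ge.
apply: leq_ltn_trans dk; apply: leq_trans (deg_le_max E z).
by apply: subset_leq_card; apply/subsetP => e eF; rewrite inE (subsetP sFE e eF) hz.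
Qed.

End Help.


Lemma bin2_double n : ('C(n, 2)).*2 = n * n.-1.
Proof.
by have := bin_ffact n 2; rewrite ffactnS ffactn1 => <-; rewrite -muln2.
Qed.

Definition D2 (T : finType) (W : {set T}) := [set e : {set T} | e \subset W & #|e| == 2].

Lemma card_D2 (T : finType) (W : {set T}) : #|D2 W| = 'C(#|W|, 2).
Proof. exact: cards_draws. Qed.

Lemma D2_simple (T : finType) (W : {set T}) : is_simple_graph (D2 W).
Proof. by move=> e; rewrite inE => /andP[_ /eqP]. Qed.

Lemma D2_edge (T : finType) (W : {set T}) e (v : T) : e \in D2 W -> v \in e ->
  exists2 y, y \in W :\ v & e = [set v; y].
Proof.
rewrite inE => /andP[sW /eqP c2] ve; have [y yv ey] := edge2 c2 ve.
exists y => //; rewrite !inE yv /=; apply: (subsetP sW); by rewrite ey !inE eqxx orbT.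
Qed.

Definition Wo k (b : bool) : {set bool * 'I_k} := [set x | x.1 == b].
Definition Eodd k := D2 (Wo k true) :|: D2 (Wo k false).

Lemma card_Wo k b : #|Wo k b| = k.
Proof.
have -> : Wo k b = setX [set b] [set: 'I_k].
  by apply/setP => -[b' i]; rewrite !inE andbT.
by rewrite cardsX cards1 cardsT card_ord mul1n.
Qed.

Lemma odd_simple k : is_simple_graph (Eodd k).
Proof. by move=> e; rewrite inE => /orP[]; apply: D2_simple. Qed.

Lemma odd_count k : ('C(k, 2)).*2 <= #|Eodd k|.
Proof.
rewrite /Eodd cardsU !card_D2 !card_Wo.
have -> : D2 (Wo k true) :&: D2 (Wo k false) = set0.
  apply/setP => e; rewrite !inE; apply/negP => /andP[/andP[s1 /eqP c1] /andP[s2 _]].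
  have : 0 < #|e| by rewrite c1.
  case/card_gt0P => x xe; move: (subsetP s1 x xe) (subsetP s2 x xe); rewrite !inE.
  by move=> /eqP -> .
by rewrite cards0 subn0 addnn.
Qed.

Lemma odd_deg k : max_degree (Eodd k) <= k.-1.
Proof.
apply: maxdeg_bound => v.
have hW : #|Wo k v.1 :\ v| = k.-1.
  by move: (cardsD1 v (Wo k v.1)); rewrite card_Wo inE eqxx /=; lia.
rewrite -hW; apply: deg_bound => e; rewrite inE => /orP[] eE ve;
  have [y yW ->] := D2_edge eE ve; exists y => //;
  move: (eE); rewrite inE => /andP[sW _];
  by move: (subsetP sW v ve); rewrite inE => /eqP ->.
Qed.

Lemma odd_nu j : matching_number (Eodd (j.*2).+1) <= j.*2.
Proof.
apply: nu_bound => M sM mM.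
have sMs : is_simple_graph M by move=> e /(subsetP sM); apply: odd_simple.
have h b : #|M :&: D2 (Wo (j.*2).+1 b)| <= j.
  have := @match_in _ (M :&: D2 (Wo (j.*2).+1 b)) (Wo (j.*2).+1 b).
  rewrite card_Wo; move=> H.
  have : (#|M :&: D2 (Wo (j.*2).+1 b)|).*2 <= (j.*2).+1.
    apply: H.
    - by move=> e; rewrite inE => /andP[/sMs].
    - by apply: matching_sub mM; apply: subsetIl.
    - by move=> e; rewrite !inE => /andP[_ /andP[]].
  lia.
apply: leq_trans (card_split sM) _.
by have := leq_add (h true) (h false); rewrite addnn.
Qed.


Section Even.
Variable m : nat.
Let I := 'I_m.+1.
Let P := (I * bool)%type.
Let Te := (I * option P)%type.
Let o : I := ord0.
Let p0 : P := (o, false).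

Definition W0 : {set Te} := [set x | x.1 == o].
Definition Cm : {set {set Te}} :=
  ((fun i : I => [set (o, Some (i, false)); (o, Some (i, true))]) @: [set: I])
  :|: [set [set (o, None); (o, Some p0)]].
Definition Hm := D2 W0 :\: Cm.
Definition sf (rp : I * P) : {set Te} := [set (rp.1, None); (rp.1, Some rp.2)].
Definition Sm := sf @: setX [set~ o] [set~ p0].
Definition Eeven := Hm :|: Sm.

Lemma card_W0 : #|W0| = (m.+1).*2.+1.
Proof.
have -> : W0 = setX [set o] [set: option P] by apply/setP => -[r x]; rewrite !inE andbT.
rewrite cardsX cards1 cardsT card_option card_prod card_ord card_bool mul1n; lia.
Qed.

Lemma card_Cm : #|Cm| <= m.+2.
Proof.
apply: leq_trans (leq_card_setU _ _) _; rewrite cards1 addn1 ltnS.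
by apply: leq_trans (leq_imset_card _ _) _; rewrite cardsT card_ord.
Qed.

Lemma sf_inj : injective sf.
Proof.
move=> [r p] [r' p'] h.
have : (r, Some p) \in sf (r', p') by rewrite -h !inE eqxx orbT.
by rewrite !inE => /orP[]/eqP [] -> // ->.
Qed.

Lemma card_Sm : #|Sm| = m * (m.+1).*2.-1.
Proof.
rewrite /Sm card_imset; last exact: sf_inj.
rewrite cardsX !cardsC1 card_prod !card_ord card_bool; lia.
Qed.

Lemma sf_card2 rp : #|sf rp| = 2.
Proof. by rewrite /sf cards2; case: rp => r p /=; rewrite xpair_eqE /= andbF. Qed.

Lemma even_simple : is_simple_graph Eeven.
Proof.
move=> e; rewrite !inE => /orP[/andP[_ /andP[_ /eqP]]//|/imsetP[rp _ ->]].
exact: sf_card2.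
Qed.

Lemma Sm_first e v : e \in Sm -> v \in e -> v.1 != o.
Proof.
case/imsetP => -[r p]; rewrite !inE => /andP[ro _] -> /set2P[]-> //.
Qed.

Lemma Hm_first e v : e \in Hm -> v \in e -> v.1 == o.
Proof.
rewrite !inE => /andP[_ /andP[sW _]] ve; move: (subsetP sW v ve); by rewrite inE.
Qed.

Lemma even_count : 'C((m.+1).*2.+1, 2) - m.+2 + m * (m.+1).*2.-1 <= #|Eeven|.
Proof.
rewrite /Eeven cardsU.
have -> : Hm :&: Sm = set0.
  apply/setP => e; rewrite in_setI in_set0; apply/negP => /andP[eH eS].
  have [rp _ erp] := imsetP eS.
  have h : (rp.1, None) \in e by rewrite erp !inE eqxx.
  by move: (Hm_first eH h) (Sm_first eS h) => ->.
rewrite cards0 subn0 card_Sm leq_add2r.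
have : #|D2 W0| - #|Cm| <= #|Hm|.
  rewrite /Hm cardsD leq_sub2l //; apply: subset_leq_card; exact: subsetIr.
rewrite card_D2 card_W0 => h; apply: leq_trans h; apply: leq_sub2l; exact: card_Cm.
Qed.

Definition partner (x : option P) : option P :=
  match x with None => Some p0 | Some (i, b) => Some (i, ~~ b) end.

Lemma partner_C x : [set (o, x); (o, partner x)] \in Cm.
Proof.
rewrite /Cm in_setU; case: x => [[i b]|] /=.
  apply/orP; left; apply/imsetP; exists i; rewrite ?inE //.
  by case: b => //=; rewrite set2C.
by rewrite in_set1 eqxx orbT.
Qed.

Lemma partner_neq x : partner x != x.
Proof. by case: x => [[i b]|] //=; apply/eqP => -[]; case: b. Qed.

Lemma even_deg : max_degree Eeven <= (m.+1).*2.-1.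
Proof.
apply: maxdeg_bound => -[r x].
case: (eqVneq r o) => [ro|rno].
  subst r.
  pose A := (W0 :\ (o, x)) :\ (o, partner x).
  have cA : #|A| = (m.+1).*2.-1.
    have c1 := cardsD1 (o, x) W0.
    have c2 := cardsD1 (o, partner x) (W0 :\ (o, x)).
    move: c1 c2; rewrite card_W0 !inE !xpair_eqE eqxx partner_neq /=.
    rewrite -/A; move: #|A| #|W0 :\ (o, x)| => a b; lia.
  rewrite -cA; apply: deg_bound => e eE ve.
  case/setUP: eE => [eH|eS]; last by move: (Sm_first eS ve); rewrite /= ?eqxx.
  have eD : e \in D2 W0 by move: eH; rewrite inE => /andP[].
  have [y yW ey] := D2_edge eD ve.
  exists y => //; rewrite /A in_setD1 yW andbT.
  apply/eqP => yz; move: eH; rewrite in_setD ey yz partner_C.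
  by [].
case: x => [q|].
  apply: leq_trans (deg_bound (A := [set (r, None)]) _) _; last by rewrite cards1; lia.
  move=> e eE ve; case/setUP: eE => [eH|eS].
    by move: (Hm_first eH ve); rewrite /= (negbTE rno).
  have [[r' p] _ erp] := imsetP eS; subst e.
  move: ve; rewrite /sf !inE !xpair_eqE /= => /orP[/andP[_ //]|/andP[/eqP <- /eqP [<-]]].
  by exists (r, None); rewrite ?inE // set2C.
apply: leq_trans (deg_bound (A := (fun p => (r, Some p)) @: [set~ p0]) _) _.
  move=> e eE ve; case/setUP: eE => [eH|eS].
    by move: (Hm_first eH ve); rewrite /= (negbTE rno).
  have [[r' p] rpX erp] := imsetP eS; subst e.
  move: ve; rewrite /sf !inE !xpair_eqE /= => /orP[/andP[/eqP <- _]|/andP[_ //]].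
  exists (r, Some p) => //; apply: imset_f; by move: rpX; rewrite inE => /andP[_ ->].
apply: leq_trans (leq_imset_card _ _) _.
rewrite cardsC1 card_prod card_ord card_bool; lia.
Qed.

Lemma even_nu : matching_number Eeven <= (m.+1).*2.-1.
Proof.
apply: nu_bound => M sM mM.
have sMs : is_simple_graph M by move=> e /(subsetP sM); apply: even_simple.
have h1 : #|M :&: Hm| <= m.+1.
  have : (#|M :&: Hm|).*2 <= #|W0|.
    apply: match_in.
    - by move=> e; rewrite inE => /andP[/sMs].
    - by apply: matching_sub mM; apply: subsetIl.
    - by move=> e; rewrite !inE => /andP[_ /andP[_ /andP[]]].
  rewrite card_W0; lia.
have h2 : #|M :&: Sm| <= m.
  have : #|M :&: Sm| <= #|(fun r : I => ((r, None) : Te)) @: [set~ o]|.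
    apply: match_hit.
      by apply: matching_sub mM; apply: subsetIl.
    move=> e; rewrite inE => /andP[_ /imsetP[[r p] rpX ->]].
    exists (r, None); last by rewrite !inE eqxx.
    by apply: imset_f; move: rpX; rewrite inE => /andP[].
  move/leq_trans; apply; apply: leq_trans (leq_imset_card _ _) _.
  by rewrite cardsC1 card_ord.
apply: leq_trans (card_split sM) _.
have := leq_add h1 h2; lia.
Qed.

End Even.


Lemma fb_le_succ d m : fb d m <= d.+1 * m.
Proof.
rewrite /fb mulSn addnC leq_add2r.
have h1 : d./2 <= uphalf d by lia.
apply: leq_trans (leq_mul h1 (leqnn _)) _.
by rewrite mulnC leq_trunc_div.
Qed.

Lemma upper k (T : finType) (E : {set {set T}}) : 7 <= k -> is_simple_graph E -> ex_P1P2 E < k ->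
  nedges E <= (if odd k then k * k - k else k * k - (3 * k) %/ 2).
Proof.
move=> k7 sE exk; have [dk nk] := ex_bounds exk.
have dk' : max_degree E <= k.-1 by lia.
have nk' : matching_number E <= k.-1 by lia.
have h := leq_trans (main_bound (leqnn _) sE dk') (fb_mono _ nk').
rewrite /nedges; apply: leq_trans h _.
case: ifP => ok.
  apply: leq_trans (fb_le_succ _ _) _; nia.
have [j kj] : exists j, k = j.*2.
  by exists k./2; move: (odd_double_half k); rewrite ok add0n.
subst k; rewrite /fb.
have hq : (j.*2).-1 %/ uphalf (j.*2).-1 <= 1.
  rewrite -ltnS ltn_divLR; lia.
move: hq; set q := _ %/ _ => hq.
have e1 : (j.*2).-1./2 = j.-1 by lia.
have e2 : (3 * j.*2) %/ 2 = 3 * j by lia.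
rewrite e1 e2.
have : j.-1 * q <= j.-1 by rewrite -[X in _ <= X]muln1 leq_mul2l hq orbT.
nia.
Qed.

Theorem theorem3p20 :
  (forall (T : finType) (E : {set {set T}}),
      is_simple_graph E -> nedges E <= (max_degree E).+1 * matching_number E) /\
  (forall k : nat, 7 <= k ->
      is_E_P1P2 k (if odd k then k * k - k else k * k - (3 * k) %/ 2)).
Proof.
split; first by move=> T E sE; exact: part1.
move=> k k7; split; first by move=> T E sE exk; exact: upper.
move=> b H.
case: (boolP (odd k)) => ok.
  have [j kj] : exists j, k = j.*2.+1.
    by exists k./2; move: (odd_double_half k); rewrite ok add1n.
  subst k.
  have ex : ex_P1P2 (Eodd j.*2.+1) < j.*2.+1.
    apply: lower_ok => //; first exact: odd_simple.
      by apply: leq_ltn_trans (odd_deg _) _.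
    by apply: leq_ltn_trans (odd_nu _) _.
  have := H _ _ (@odd_simple _) ex; rewrite /nedges => hb.
  apply: leq_trans hb; apply: leq_trans (odd_count _).
  rewrite bin2_double; nia.
have [m km] : exists m, k = (m.+1).*2.
  exists (k./2).-1; move: (odd_double_half k); rewrite (negbTE ok) add0n => hk.
  rewrite prednK //; lia.
subst k.
have ex : ex_P1P2 (Eeven m) < (m.+1).*2.
  apply: lower_ok => //; first exact: even_simple.
    by apply: leq_ltn_trans (even_deg _) _; lia.
  by apply: leq_ltn_trans (even_nu _) _; lia.
have := H _ _ (@even_simple _) ex; rewrite /nedges => hb.
apply: leq_trans hb; apply: leq_trans (even_count _).
have hc := bin2_double (m.+1).*2.+1.
move: hc; set C := 'C(_, 2) => hc.
nia.
Qed.
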